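(* Let $X$ be a topological space and $a\in\mathscr{C}_{\mathrm{a.e.}}(X)$. Then there is a unique representative $a_{\max}\in a$ such that $f=a_{\max}|_{\operatorname{dom}f}$ for all $f\in a$. In particular $\operatorname{dom}a_{\max}\supseteq\operatorname{dom}f$ for all $f\in a$.
   Context: $\mathscr{C}_{\mathrm{a.e.}}(X)$: consider continuous real-valued functions $f$ defined on dense open subsets $\operatorname{dom}f$ of $X$; define $f+g$, $fg$ pointwise on $\operatorname{dom}f\cap\operatorname{dom}g$; $f\approx g$ iff $f|_A=g|_A$ for some dense open $A\subseteq\operatorname{dom}f\cap\operatorname{dom}g$. $\mathscr{C}_{\mathrm{a.e.}}(X)$ is the set of $\approx$-equivalence classes (each element $a$ is thus a set of such functions, its representatives). *)

(* Defs.v *)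
From HB Require Import structures.
From mathcomp Require Import all_boot all_order all_algebra.
From mathcomp Require Import all_classical all_reals all_analysis.
From mathcomp Require Import Rstruct Rstruct_topology.
From Stdlib Require Import Reals.
Set Implicit Arguments. Unset Strict Implicit. Unset Printing Implicit Defensive.
Local Open Scope classical_set_scope.

(* A partial real-valued function on X: f x = None means x is outside dom f.
   Values are in Stdlib's reals R (a realType via Rstruct). *)
Definition pfun (X : topologicalType) := X -> option R.

Definition dom (X : topologicalType) (f : pfun X) : set X :=
  [set x | f x <> None].

(* value on the domain (default 0 outside, irrelevant) *)
Definition pval (X : topologicalType) (f : pfun X) (x : X) : R :=
  match f x with Some r => r | None => 0%R end.

Definition is_pcf (X : topologicalType) (f : pfun X) : Prop :=
  open (dom f) /\ dense (dom f) /\ {within dom f, continuous (pval f)}.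

Definition approx (X : topologicalType) (f g : pfun X) : Prop :=
  exists A : set X, [/\ open A, dense A, A `<=` dom f `&` dom g &
    forall x, A x -> f x = g x].

Definition is_Cae (X : topologicalType) (a : set (pfun X)) : Prop :=
  exists f0, is_pcf f0 /\ a = [set g | is_pcf g /\ approx g f0].

Definition prestrict (X : topologicalType) (g : pfun X) (D : set X) : pfun X :=
  fun x => if `[< D x >] then g x else None.

(* Main.v *)
Require Import Defs.
From Stdlib Require Import Reals.
From HB Require Import structures.
From mathcomp Require Import all_boot all_order all_algebra.
From mathcomp Require Import all_classical all_reals all_analysis.
From mathcomp Require Import Rstruct Rstruct_topology.
From mathcomp Require Import ring lra.
Import Order.TTheory GRing.Theory Num.Theory.
Set Implicit Arguments.
Local Open Scope classical_set_scope.
Local Open Scope ring_scope.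

Lemma pcf_cont (X : topologicalType) (f : pfun X) x :
  is_pcf f -> dom f x -> pval f @ x --> pval f x.
Proof.
move=> [oD [_ cf]] Dx.
move: cf; rewrite continuous_open_subspace // => /(_ x); apply.
by rewrite inE.
Qed.

Lemma dom_Some (X : topologicalType) (f : pfun X) x : dom f x -> f x = Some (pval f x).
Proof. by rewrite /dom /pval /=; case: (f x). Qed.

Lemma agree (X : topologicalType) (f g : pfun X) (A : set X) :
  is_pcf f -> is_pcf g -> dense A -> (forall y, A y -> f y = g y) ->
  forall x, dom f x -> dom g x -> f x = g x.
Proof.
move=> pf pg dA fg x fx gx.
rewrite (dom_Some fx) (dom_Some gx); congr Some.
apply/eqP; apply/negPn/negP => neq.
pose e := `|pval f x - pval g x| / 2.
have e0 : 0 < e.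
  have : 0 < `|pval f x - pval g x| by rewrite normr_gt0 subr_eq0.
  by move=> h; rewrite /e; lra.
have Nf := @cvgr_dist_lt R R^o X (nbhs x) (nbhs_filter x) (pval f) (pval f x) (pcf_cont pf fx) e e0.
have Ng := @cvgr_dist_lt R R^o X (nbhs x) (nbhs_filter x) (pval g) (pval g x) (pcf_cont pg gx) e e0.
have := @filterI X (nbhs x) (nbhs_filter x) _ _ Nf Ng.
rewrite nbhsE => -[B [oB Bx] BP].
have [y [By Ay]] := dA B (ex_intro _ x Bx) oB.
have [h1 h2] := BP y By.
have fgy : pval f y = pval g y by rewrite /pval fg.
rewrite fgy in h1.
have := ler_normD (pval f x - pval g y) (pval g y - pval g x).
have -> : pval f x - pval g y + (pval g y - pval g x) = pval f x - pval g x by ring.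
rewrite distrC in h2.
rewrite /e in h1 h2; lra.
Qed.

Lemma dense_openI (X : topologicalType) (A B : set X) :
  open A -> dense A -> dense B -> dense (A `&` B).
Proof.
move=> oA dA dB O O0 oO.
have [y [Oy Ay]] := dA O O0 oO.
have [z [[Oz Az] Bz]] := dB (O `&` A) (ex_intro _ y (conj Oy Ay)) (openI oO oA).
by exists z.
Qed.

Lemma a_agree (X : topologicalType) (a : set (pfun X)) (f g : pfun X) :
  is_Cae a -> a f -> a g -> forall x, dom f x -> dom g x -> f x = g x.
Proof.
move=> [f0 [pf0 ->]] [pf [A1 [oA1 dA1 _ e1]]] [pg [A2 [oA2 dA2 _ e2]]].
apply: (agree pf pg (dense_openI oA1 dA1 dA2)).
by move=> y [y1 y2]; rewrite e1 // e2.
Qed.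

Definition amax (X : topologicalType) (a : set (pfun X)) : pfun X := fun x =>
  match pselect (exists f, a f /\ dom f x) with
  | left H => projT1 (cid H) x
  | right _ => None
  end.

Lemma amax_eq (X : topologicalType) (a : set (pfun X)) f x :
  is_Cae a -> a f -> dom f x -> amax a x = f x.
Proof.
move=> ca af fx; rewrite /amax; case: pselect => [H|nH]; last first.
  by exfalso; apply: nH; exists f.
case: (cid H) => g [ag gx] /=.
exact: (a_agree ca ag af).
Qed.

Lemma amax_dom (X : topologicalType) (a : set (pfun X)) x :
  dom (amax a) x -> exists f, a f /\ dom f x.
Proof.
rewrite /dom /amax /=; case: pselect => [H|nH] //.
Qed.

Lemma not_dom (X : topologicalType) (f : pfun X) x : ~ dom f x -> f x = None.
Proof. by rewrite /dom /=; case: (f x) => // r H; exfalso; apply: H. Qed.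

Theorem proposition16 (X : topologicalType) (a : set (pfun X)) :
  is_Cae a ->
  (exists! amax : pfun X, a amax /\ forall f, a f -> f = prestrict amax (dom f)) /\
  (forall amax : pfun X, a amax -> (forall f, a f -> f = prestrict amax (dom f)) ->
     forall f, a f -> dom f `<=` dom amax).
Proof.
move=> ca.
have domE : dom (amax a) = \bigcup_(f in a) dom f.
  apply/seteqP; split => x.
    by move=> /amax_dom [f [af fx]]; exists f.
  move=> [f af fx]; rewrite /dom /= (amax_eq ca af fx); exact: fx.
have [f0 [pf0 aE]] := ca.
have af0 : a f0.
  have [Ho [d0 _]] := pf0.
  rewrite aE; split => //.
  by exists (dom f0); split => // x dx.
have pa : is_pcf (amax a).
  have oD : open (dom (amax a)).
    rewrite domE; apply: bigcup_open => f; rewrite aE.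
    by move=> [[Hof _] _].
  split => //; split.
    move=> O O0 oO; have [Ho [d0 _]] := pf0.
    have [y [Oy fy]] := d0 O O0 oO.
    by exists y; split => //; rewrite domE; exists f0.
  rewrite continuous_open_subspace // => x; rewrite inE => dx.
  have [f [af fx]] := amax_dom dx.
  have pf : is_pcf f by move: af; rewrite aE => -[].
  rewrite /continuous_at.   have -> : pval (amax a) x = pval f x by rewrite /pval (amax_eq ca af fx).
  apply: cvg_trans (pcf_cont pf fx).
  apply: near_eq_cvg.
  have [HoF _] := pf.
  have : nbhs x (dom f) by apply: open_nbhs_nbhs; split.
  apply: filterS => y fy.
  by rewrite /pval (amax_eq ca af fy).
have aa : a (amax a).
  have [Ho [d0 _]] := pf0.
  rewrite {1}aE; split => //.
  exists (dom f0); split => // x dx.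
    by split => //; rewrite domE; exists f0.
  exact: amax_eq.
have prop : forall f, a f -> f = prestrict (amax a) (dom f).
  move=> f af; apply: funext => x; rewrite /prestrict.
  case: asboolP => [fx|nfx].
    by rewrite (amax_eq ca af fx).
  exact: not_dom.
split.
  exists (amax a); split; first by split.
  move=> b [ab hb]; apply: funext => x.
  case: (pselect (dom b x)) => [bx|nbx].
    by rewrite (amax_eq ca ab bx).
  rewrite (not_dom nbx).
  rewrite (hb _ aa) /prestrict; case: asboolP => // dx.
  exact: not_dom nbx.
move=> b ab hb f af x fx.
have := hb f af; move/(congr1 (fun h => h x)); rewrite /prestrict.
case: asboolP => // _ e; rewrite /dom /= -e; exact: fx.
Qed.
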